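(* Let $s,m$ be positive integers with $m$ odd and $n=sm$. Let $k$ be a positive integer with $t=\gcd(n,k)$ such that $\mathbb{F}_{2^t}\subseteq\mathbb{F}_{2^s}$ and $n/t$ is odd. Fix $\alpha\in\mathbb{F}_{2^s}\setminus\{0\}$ and let \[ G(x)=x^{2^k+1}+\alpha(x^{2^s}+x)^{2^n-1}+\alpha=\begin{cases}x^{2^k+1}+\alpha, & x\in\mathbb{F}_{2^s},\\ x^{2^k+1}, & x\notin\mathbb{F}_{2^s},\end{cases} \] as a function $\mathbb{F}_{2^n}\to\mathbb{F}_{2^n}$. Then $\delta_{G,c}\leq 3$ for every $c\in\mathbb{F}_{2^t}\setminus\{1\}$.
   Context: For $F:\mathbb{F}_{2^n}\to\mathbb{F}_{2^n}$ and $c\in\mathbb{F}_{2^n}$, let ${}_c\Delta_F(a,b)=\#\{x\in\mathbb{F}_{2^n}: F(x+a)-cF(x)=b\}$ and the $c$-differential uniformity is $\delta_{F,c}=\max\{{}_c\Delta_F(a,b): a,b\in\mathbb{F}_{2^n},\ a\neq 0\text{ if } c=1\}$. *)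

(* Defs.v *)
From HB Require Import structures.
From mathcomp Require Import all_boot all_order all_algebra all_field.
Set Implicit Arguments. Unset Strict Implicit. Unset Printing Implicit Defensive.
Import GRing.Theory.
Local Open Scope ring_scope.

(* The subfield F_{2^r} of a finite field F of characteristic 2, viewed as the
   set of fixed points of x |-> x^(2^r). *)
Definition subF (F : finFieldType) (r : nat) : {set F} :=
  [set x : F | x ^+ (2 ^ r) == x].

Definition cDelta (F : finFieldType) (f : F -> F) (c a b : F) : nat :=
  #|[set x : F | f (x + a) - c * f x == b]|.

Definition cdu (F : finFieldType) (f : F -> F) (c : F) : nat :=
  \max_(a : F | (c != 1) || (a != 0)) \max_(b : F) cDelta f c a b.

Definition Gfun (F : finFieldType) (n s k : nat) (alpha : F) (x : F) : F :=
  x ^+ (2 ^ k + 1) + alpha * (x ^+ (2 ^ s) + x) ^+ (2 ^ n - 1) + alpha.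

(* Main.v *)
Require Import Defs.
From HB Require Import structures.
From mathcomp Require Import all_boot all_order all_algebra all_field.
From mathcomp Require Import ring.
Set Implicit Arguments. Unset Strict Implicit. Unset Printing Implicit Defensive.
Import GRing.Theory.
Local Open Scope ring_scope.

Section Aux.
Variable F : finFieldType.
Hypothesis ch2 : (2 \in [pchar F])%N.

Lemma frobD (x y : F) r : (x + y) ^+ (2 ^ r) = x ^+ (2 ^ r) + y ^+ (2 ^ r).
Proof.
apply: exprDn_pchar; rewrite (eq_pnat _ (pcharf_eq ch2)) pnatX pnatE // inE.
Qed.

Lemma frobN (x : F) : - x = x.
Proof. exact: oppr_pchar2. Qed.

Lemma fix_mul (z : F) r j : z ^+ (2 ^ r) = z -> z ^+ (2 ^ (r * j)) = z.
Proof.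
move=> hz; elim: j => [|j IH]; first by rewrite muln0 expr1.
by rewrite mulnS expnD exprM hz IH.
Qed.

Lemma fix_gcd (z : F) a b : (0 < a)%N -> z ^+ (2 ^ a) = z -> z ^+ (2 ^ b) = z ->
  z ^+ (2 ^ gcdn a b) = z.
Proof.
move=> a0 ha hb; have [u _ /dvdnP [v hv]] := Bezoutl b a0.
have e1 : z ^+ (2 ^ (gcdn a b + u * b)) = z by rewrite hv mulnC fix_mul.
by rewrite expnD mulnC exprM mulnC fix_mul in e1.
Qed.

Section Arith.
Local Open Scope nat_scope.
Lemma gcd2 n k : (0 < k)%N -> odd (n %/ gcdn n k) -> gcdn (k * 2) n = gcdn n k.
Proof.
move=> k0 odd_n; set t := gcdn n k.
have t0 : (0 < t)%N by rewrite gcdn_gt0 k0 orbT.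
have [n' hn] : exists n', n = (n' * t)%N by exists (n %/ t); rewrite divnK // dvdn_gcdl.
have [k' hk] : exists k', k = (k' * t)%N by exists (k %/ t); rewrite divnK // dvdn_gcdr.
have hn' : (n %/ t)%N = n' by rewrite hn mulnK.
rewrite hn' in odd_n.
have cop : gcdn n' k' = 1%N.
  apply/eqP; rewrite -(eqn_pmul2r t0) mul1n muln_gcdl -hn -hk.
  by [].
rewrite hk hn -mulnA [(t * 2)%N]mulnC mulnA -muln_gcdl.
suff -> : gcdn (k' * 2) n' = 1%N by rewrite mul1n.
apply/eqP; rewrite -/(coprime _ _) coprimeMl; apply/andP; split.
  by rewrite /coprime gcdnC cop.
by rewrite coprime2n.
Qed.
End Arith.

Lemma pow_inj n k (x y : F) : #|F| = (2 ^ n)%N -> (0 < k)%N -> odd (n %/ gcdn n k) ->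
  x ^+ (2 ^ k + 1) = y ^+ (2 ^ k + 1) -> x = y.
Proof.
move=> cF k0 odd_n e.
have [y0'|y0] := eqVneq y 0.
  by move: e; rewrite y0' expr0n addn1 /= => /eqP; rewrite expf_eq0 => /andP[_ /eqP].
set z := x / y.
have ez : z ^+ (2 ^ k + 1) = 1 by rewrite /z exprMn e exprVn divff // expf_neq0.
have z0 : z != 0.
  by apply/eqP => z0; move: ez; rewrite z0 expr0n addn1 /= => /eqP; rewrite eq_sym oner_eq0.
have zq : z ^+ (2 ^ k) = z^-1 by apply: (mulIf z0); rewrite -exprSr -addn1 ez mulVf.
have z2k : z ^+ (2 ^ (k * 2)) = z.
  by rewrite muln2 -addnn expnD exprM zq exprVn zq invrK.
have zn : z ^+ (2 ^ n) = z by rewrite -cF expf_card.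
have zt := @fix_gcd z (k * 2) n (ltac:(by rewrite muln_gt0 k0)) z2k zn.
rewrite gcd2 // in zt.
have zk : z ^+ (2 ^ k) = z.
  have [j ->] : exists j, k = (gcdn n k * j)%N.
    by exists (k %/ gcdn n k)%N; rewrite mulnC divnK // dvdn_gcdr.
  exact: fix_mul.
have z1 : z = 1.
  have zz : z ^+ 2 = 1 by rewrite -ez exprD zk expr1 expr2.
  have h2 : (z - 1) ^+ 2 = 0.
    by rewrite frobN -[2%N]/(2 ^ 1)%N frobD -[(2^1)%N]/2%N zz expr1n addrr_pchar2.
  by apply/eqP; rewrite -subr_eq0; move/eqP: h2; rewrite expf_eq0.
by apply: (mulIf (invr_neq0 y0)); rewrite -/z z1 mulfV.
Qed.

Lemma D_inj n k (c a : F) : #|F| = (2 ^ n)%N -> (0 < k)%N -> odd (n %/ gcdn n k) ->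
  c ^+ (2 ^ gcdn n k) = c -> c != 1 ->
  injective (fun x : F => (x + a) ^+ (2 ^ k + 1) - c * x ^+ (2 ^ k + 1)).
Proof.
move=> cF k0 odd_n hc c1 x y /= e.
have ck : c ^+ (2 ^ k) = c.
  have [j ->] : exists j, k = (gcdn n k * j)%N.
    by exists (k %/ gcdn n k)%N; rewrite mulnC divnK // dvdn_gcdr.
  exact: fix_mul.
set d := 1 - c.
have d0 : d != 0 by rewrite /d subr_eq0 eq_sym.
have dq : d ^+ (2 ^ k) = d by rewrite /d !(frobN c) frobD expr1n ck.
have key : forall u, d * ((u + a) ^+ (2 ^ k + 1) - c * u ^+ (2 ^ k + 1)) =
    (d * u + a) ^+ (2 ^ k + 1) + (d - 1) * (a ^+ (2 ^ k) * a).
  move=> u; rewrite !addn1 !exprSr !frobD exprMn dq /d.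
  ring.
have e2 : (d * x + a) ^+ (2 ^ k + 1) = (d * y + a) ^+ (2 ^ k + 1).
  by apply: (addIr ((d - 1) * (a ^+ (2 ^ k) * a))); rewrite -!key e.
have := pow_inj cF k0 odd_n e2 => /addIr /(mulfI d0).
done.
Qed.
End Aux.

Theorem theorem2p13 (F : finFieldType) (n s m k : nat) (alpha : F) :
  #|F| = (2 ^ n)%N ->
  (0 < s)%N -> (0 < m)%N -> odd m -> n = (s * m)%N ->
  (0 < k)%N ->
  subF F (gcdn n k) \subset subF F s ->
  odd (n %/ gcdn n k) ->
  alpha \in subF F s -> alpha != 0 ->
  forall c : F, c \in subF F (gcdn n k) -> c != 1 ->
    (cdu (Gfun n s k alpha) c <= 3)%N.
Proof.
move=> cF s0 m0 _ hn k0 _ odd_n _ _ c hc c1.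
have ch2 : (2 \in [pchar F])%N := card_finPcharP cF (isT : prime 2).
have n0 : (0 < n)%N by rewrite hn muln_gt0 s0.
have hc' : c ^+ (2 ^ gcdn n k) = c by move: hc; rewrite inE => /eqP.
set S := subF F s.
have inS x : (x \in S) = (x ^+ (2 ^ s) == x) by rewrite inE.
have wS x : (x ^+ (2 ^ s) + x) ^+ (2 ^ n - 1) = if x \in S then 0 else 1.
  rewrite inS; case: eqP => [->|hx].
    by rewrite addrr_pchar2 // expr0n subn_eq0 leqNgt (ltn_exp2l 0) // n0.
  have y0 : x ^+ (2 ^ s) + x != 0.
    by apply/eqP => h; apply: hx; move/eqP: h; rewrite addr_eq0 oppr_pchar2 // => /eqP.
  apply: (mulfI y0); rewrite mulr1 -exprS subn1 prednK ?expn_gt0 //.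
  by rewrite -cF expf_card.
apply/bigmax_leqP => a _; apply/bigmax_leqP => b _.
set D := fun x : F => (x + a) ^+ (2 ^ k + 1) - c * x ^+ (2 ^ k + 1).
have Dinj : injective D := D_inj ch2 cF k0 odd_n hc' c1.
set h := fun b0 b1 : bool => alpha * (if b1 then 0 else 1) + alpha
   - c * (alpha * (if b0 then 0 else 1) + alpha).
have GD x : Gfun n s k alpha (x + a) - c * Gfun n s k alpha x = D x + h (x \in S) (x + a \in S).
  by rewrite /Gfun !wS /D /h; case: (x \in S); case: (x + a \in S); rewrite /=; ring.
set ev := fun x : F => (x \in S, x + a \in S).
set A := [set x : F | Gfun n s k alpha (x + a) - c * Gfun n s k alpha x == b].
have evinj : {in A &, injective ev}.
  move=> x y; rewrite !inE !GD => /eqP hx /eqP hy [ex ey].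
  apply: Dinj; apply: (addIr (h (x \in S) (x + a \in S))).
  by rewrite hx ex ey hy.
rewrite /cDelta -/A -(card_in_imset evinj).
apply: (@leq_trans #|[set~ (true, a \notin S)]|).
  apply: subset_leq_card; apply/subsetP => p /imsetP [x _ ->].
  rewrite !inE /ev; apply/negP => /eqP [xS].
  rewrite !inS in xS *; rewrite frobD // (eqP xS) (inj_eq (addrI x)).
  by case: (a ^+ (2 ^ s) == a).
by rewrite cardsC1 card_prod card_bool.
Qed.
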